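(* There exists $\theta_1\in(0,\pi/8)$, depending only on $\alpha$, such that for every $\theta\in(0,\theta_1)$ the following holds. If $p,q\in\mathbb H$ satisfy $z_q\le0$, $z_p\le0$, $\rho_q\le\rho_p$, $p,q\in\mathcal C(\theta)$, $q\notin B(p,r_p)$ and $p\notin B(q,r_q)$, then $z_q<2z_p$ and $\rho_q<\rho_p\cos(2\theta)$.
   Context: $\mathbb H=\mathbb R^3$, $p=(x_p,y_p,z_p)$, $\rho_p=\sqrt{x_p^2+y_p^2}$, group law $(x,y,z)\cdot(x',y',z')=(x+x',y+y',z+z'+\tfrac12(xy'-yx'))$, dilations $\delta_\lambda(x,y,z)=(\lambda x,\lambda y,\lambda^2z)$. Fix $\alpha>0$ such that $d_\alpha(p,q)=\inf\{r>0:\delta_{1/r}(p^{-1}\cdot q)\in B_\alpha\}$ is a distance, $B_\alpha$ the closed Euclidean ball of radius $\alpha$ at $0$. $B(p,r)=\{q:d_\alpha(q,p)\le r\}$, $r_p=d_\alpha(0,p)$. $\mathcal C(\theta)=\{p:|y_p|<x_p\tan\theta\}$. *)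

(* Defs.v *)
From Stdlib Require Import Reals Lra ClassicalEpsilon.
Open Scope R_scope.

(* Points of the Heisenberg group H = R^3 *)
Record pt : Type := mkpt { xc : R; yc : R; zc : R }.

Definition origin : pt := mkpt 0 0 0.

Definition hmul (p q : pt) : pt :=
  mkpt (xc p + xc q) (yc p + yc q)
       (zc p + zc q + / 2 * (xc p * yc q - yc p * xc q)).

Definition hinv (p : pt) : pt := mkpt (- xc p) (- yc p) (- zc p).

Definition dil (l : R) (p : pt) : pt := mkpt (l * xc p) (l * yc p) (l * l * zc p).

Definition inBalpha (a : R) (p : pt) : Prop :=
  xc p * xc p + yc p * yc p + zc p * zc p <= a * a.

Definition dset (a : R) (p q : pt) (r : R) : Prop :=
  0 < r /\ inBalpha a (dil (/ r) (hmul (hinv p) q)).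

Definition is_glb (E : R -> Prop) (m : R) : Prop :=
  (forall r, E r -> m <= r) /\ (forall b, (forall r, E r -> b <= r) -> b <= m).

Definition dalpha (a : R) (p q : pt) : R :=
  epsilon (inhabits 0) (fun m => is_glb (dset a p q) m).

Definition is_distance (d : pt -> pt -> R) : Prop :=
  (forall p q, 0 <= d p q) /\
  (forall p q, d p q = 0 <-> p = q) /\
  (forall p q, d p q = d q p) /\
  (forall p q w, d p w <= d p q + d q w).

Definition inB (a : R) (p : pt) (r : R) (q : pt) : Prop := dalpha a q p <= r.

Definition rad (a : R) (p : pt) : R := dalpha a origin p.

Definition rho (p : pt) : R := sqrt (xc p * xc p + yc p * yc p).

Definition inCone (theta : R) (p : pt) : Prop := Rabs (yc p) < xc p * tan theta.

(* Main.v *)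
Require Import Defs.
From Stdlib Require Import Reals Lra Psatz ClassicalEpsilon.
Open Scope R_scope.

Lemma numeric1 t u : 0 <= t -> 8*t <= 1 -> 0 <= u -> 8*u <= 1 ->
  u*(2+u)*(1+t*t) < 1 - 3*(t*t) /\
  u*(2+u)*((1+t*t)*(1+t*t)) < 2*((1-t*t)*(1-t*t)) - (1+t*t)*(1+t*t).
Proof.
  intros. set (T := t*t).
  assert (0 <= T <= 1/64) by (unfold T; split; nra).
  assert (0 <= u*(2+u) <= 17/64) by (split; nra).
  split; nra.
Qed.

Lemma core (a t xp yp zp xq yq zq rp rq Lp Lq : R) :
 0<a -> 0<t -> t*(8*(a+1)) <= 1 -> Rabs yp < xp*t -> Rabs yq < xq*t ->
 zq<=0 -> zp<=0 ->
 rp*rp = xp*xp+yp*yp -> rq*rq = xq*xq+yq*yq -> 0<=rp -> 0<=rq -> rq<=rp ->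
 0<Lp -> 0<Lq ->
 Lp*(xp*xp+yp*yp) + Lp*Lp*(zp*zp) <= a*a ->
 Lq*(xq*xq+yq*yq) + Lq*Lq*(zq*zq) <= a*a ->
 a*a < Lp*((xq-xp)*(xq-xp)+(yq-yp)*(yq-yp))
   + Lp*Lp*((zq-zp+/2*(xq*yp-xp*yq))*(zq-zp+/2*(xq*yp-xp*yq))) ->
 a*a < Lq*((xq-xp)*(xq-xp)+(yq-yp)*(yq-yp))
   + Lq*Lq*((zq-zp+/2*(xq*yp-xp*yq))*(zq-zp+/2*(xq*yp-xp*yq))) ->
 zq < 2*zp /\ rq*(1+t*t) < rp*(1-t*t).
Proof.
  intros ha ht ht8 hyp hyq hzq hzp erp erq rp0 rq0 rqp Lp0 Lq0 Mp Mq NA NB.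
  set (c := /2*(xq*yp-xp*yq)) in *.
  set (W := zq - zp + c) in *.
  apply Rabs_def2 in hyp. apply Rabs_def2 in hyq.
  assert (xp0 : 0 < xp) by nra. assert (xq0 : 0 < xq) by nra.
  assert (t8 : 8*t <= 1) by nra.
  assert (u8 : 8*(t*a) <= 1) by nra.
  assert (rpx : xp <= rp) by nra. assert (rqx : xq <= rq) by nra.
  assert (yp2 : yp*yp <= xp*xp*(t*t)) by nra.
  assert (yq2 : yq*yq <= xq*xq*(t*t)) by nra.
  set (k := t*(rp*rq)).
  assert (xx : xp*xq <= rp*rq) by nra.
  assert (hc1 : xq*yp <= xq*(xp*t)) by nra.
  assert (hc2 : xq*(-(xp*t)) <= xq*yp) by nra.
  assert (hc3 : xp*yq <= xp*(xq*t)) by nra.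
  assert (hc4 : xp*(-(xq*t)) <= xp*yq) by nra.
  assert (ck : -k <= c <= k) by (unfold c, k; split; nra).
  set (P := xp*xq + yp*yq).
  assert (hyy : -(xp*t*(xq*t)) <= yp*yq) by nra.
  assert (hP1 : xp*xq*(1-t*t) <= P) by (unfold P; nra).
  assert (hrr2 : (rp*rq)*(rp*rq) <= (xp*xq*(1+t*t))*(xp*xq*(1+t*t))).
  { replace ((rp*rq)*(rp*rq)) with ((rp*rp)*(rq*rq)) by ring.
    rewrite erp, erq.
    replace ((xp*xq*(1+t*t))*(xp*xq*(1+t*t))) with ((xp*xp*(1+t*t))*(xq*xq*(1+t*t))) by ring.
    apply Rmult_le_compat; nra. }
  assert (hrr : rp*rq <= xp*xq*(1+t*t)).
  { destruct (Rle_or_lt (rp*rq) (xp*xq*(1+t*t))) as [h|h]; [exact h|].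
    exfalso. assert (0 <= xp*xq*(1+t*t)) by nra. nra. }
  assert (hP : rp*rq*(1-t*t) <= P*(1+t*t)).
  { assert (xp*xq*(1-t*t)*(1+t*t) <= P*(1+t*t)) by (apply Rmult_le_compat_r; nra).
    assert (rp*rq*(1-t*t) <= xp*xq*(1+t*t)*(1-t*t)) by (apply Rmult_le_compat_r; nra).
    nra. }
  assert (eS : (xq-xp)*(xq-xp)+(yq-yp)*(yq-yp) = (xp*xp+yp*yp) + (xq*xq+yq*yq) - 2*P)
    by (unfold P; ring).
  rewrite eS in NA, NB. rewrite <- erp, <- erq in *.
  assert (rpq : 0 < rp*rq) by nra.
  destruct (numeric1 t (t*a)) as [N1 N2]; try nra.
  assert (Lzp : Lp*(-zp) <= a).
  { assert (Lp*Lp*(zp*zp) <= a*a) by nra. nra. }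
  assert (Lrp : Lp*(rp*rp) <= a*a) by nra.
  assert (Lzq : Lq*(-zq) <= a).
  { assert (Lq*Lq*(zq*zq) <= a*a) by nra. nra. }
  assert (Lrq : Lq*(rq*rq) <= a*a) by nra.
  assert (G1 : zq < 2*zp).
  { destruct (Rlt_or_le zq (2*zp)) as [h|h]; [exact h|]. exfalso.
    assert (hW : -(-zp+k) <= W <= -zp+k) by (unfold W; lra).
    assert (hW2 : W*W - zp*zp <= 2*(-zp)*k + k*k) by nra.
    assert (A1 : Lp*(W*W - zp*zp) > 2*P - rq*rq).
    { assert (Lp*(Lp*(W*W - zp*zp) - (2*P - rq*rq)) > 0) by nra. nra. }
    assert (A2 : Lp*(W*W-zp*zp) <= 2*k*(Lp*(-zp)) + Lp*(k*k)).
    { assert (Lp*(W*W-zp*zp) <= Lp*(2*(-zp)*k+k*k)) by (apply Rmult_le_compat_l; lra). nra. }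
    assert (A3 : 2*k*(Lp*(-zp)) <= 2*k*a) by (apply Rmult_le_compat_l; unfold k; nra).
    assert (A4 : Lp*(k*k) <= (t*a)*(t*a)*(rp*rq)).
    { unfold k. replace (Lp*(t*(rp*rq)*(t*(rp*rq)))) with ((Lp*(rp*rp))*(t*t*(rq*rq))) by ring.
      assert ((Lp*(rp*rp))*(t*t*(rq*rq)) <= (a*a)*(t*t*(rq*rq))) by (apply Rmult_le_compat_r; nra).
      assert (rq*rq <= rp*rq) by nra. nra. }
    assert (A5 : Lp*(W*W-zp*zp) <= (t*a)*(2+t*a)*(rp*rq)) by (unfold k in *; nra).
    assert (A6 : rp*rq*(1-3*(t*t)) <= (2*P - rq*rq)*(1+t*t)).
    { assert (rq*rq*(1+t*t) <= rp*rq*(1+t*t)) by (apply Rmult_le_compat_r; nra). nra. }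
    assert (A7 : (t*a)*(2+t*a)*(rp*rq)*(1+t*t) < rp*rq*(1-3*(t*t))).
    { replace ((t*a)*(2+t*a)*(rp*rq)*(1+t*t)) with ((rp*rq)*((t*a)*(2+t*a)*(1+t*t))) by ring.
      apply Rmult_lt_compat_l; lra. }
    assert (A8 : Lp*(W*W-zp*zp)*(1+t*t) <= (t*a)*(2+t*a)*(rp*rq)*(1+t*t))
      by (apply Rmult_le_compat_r; nra).
    assert (A9 : (2*P - rq*rq)*(1+t*t) < Lp*(W*W-zp*zp)*(1+t*t))
      by (apply Rmult_lt_compat_r; nra).
    lra. }
  split; [exact G1|].
  destruct (Rlt_or_le (rq*(1+t*t)) (rp*(1-t*t))) as [h|h]; [exact h|]. exfalso.
  assert (hW : -(-zq+k) <= W <= -zq+k) by (unfold W; lra).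
  assert (hW2 : W*W - zq*zq <= 2*(-zq)*k + k*k) by nra.
  assert (B1 : Lq*(W*W - zq*zq) > 2*P - rp*rp).
  { assert (Lq*(Lq*(W*W - zq*zq) - (2*P - rp*rp)) > 0) by nra. nra. }
  assert (B2 : Lq*(W*W-zq*zq) <= 2*k*(Lq*(-zq)) + Lq*(k*k)).
  { assert (Lq*(W*W-zq*zq) <= Lq*(2*(-zq)*k+k*k)) by (apply Rmult_le_compat_l; lra). nra. }
  assert (B3 : 2*k*(Lq*(-zq)) <= 2*k*a) by (apply Rmult_le_compat_l; unfold k; nra).
  assert (B4 : Lq*(k*k) <= (t*a)*(t*a)*(rp*rp)).
  { unfold k. replace (Lq*(t*(rp*rq)*(t*(rp*rq)))) with ((Lq*(rq*rq))*(t*t*(rp*rp))) by ring.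
    assert ((Lq*(rq*rq))*(t*t*(rp*rp)) <= (a*a)*(t*t*(rp*rp))) by (apply Rmult_le_compat_r; nra).
    nra. }
  assert (B4' : 2*k*a <= 2*(t*a)*(rp*rp)).
  { unfold k. replace (2*(t*(rp*rq))*a) with ((2*(t*a)*rp)*rq) by ring.
    replace (2*(t*a)*(rp*rp)) with ((2*(t*a)*rp)*rp) by ring.
    apply Rmult_le_compat_l; [|exact rqp]. apply Rmult_le_pos; [|exact rp0]. apply Rmult_le_pos; [lra|]. apply Rmult_le_pos; lra. }
  assert (B5 : Lq*(W*W-zq*zq) <= (t*a)*(2+t*a)*(rp*rp)) by nra.
  assert (B6 : rp*rp*(2*((1-t*t)*(1-t*t)) - (1+t*t)*(1+t*t)) <= (2*P - rp*rp)*((1+t*t)*(1+t*t))).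
  { assert (2*(rp*rq*(1-t*t))*(1+t*t) <= 2*(P*(1+t*t))*(1+t*t)) by (apply Rmult_le_compat_r; nra).
    assert (rp*(1-t*t)*(rp*(1-t*t)) <= rq*(1+t*t)*(rp*(1-t*t))) by (apply Rmult_le_compat_r; nra).
    nra. }
  assert (B7 : (t*a)*(2+t*a)*(rp*rp)*((1+t*t)*(1+t*t)) <
                rp*rp*(2*((1-t*t)*(1-t*t)) - (1+t*t)*(1+t*t))).
  { replace ((t*a)*(2+t*a)*(rp*rp)*((1+t*t)*(1+t*t))) with
      ((rp*rp)*((t*a)*(2+t*a)*((1+t*t)*(1+t*t)))) by ring.
    apply Rmult_lt_compat_l; nra. }
  assert (B8 : Lq*(W*W-zq*zq)*((1+t*t)*(1+t*t)) <= (t*a)*(2+t*a)*(rp*rp)*((1+t*t)*(1+t*t)))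
    by (apply Rmult_le_compat_r; nra).
  assert (B9 : (2*P - rp*rp)*((1+t*t)*(1+t*t)) < Lq*(W*W-zq*zq)*((1+t*t)*(1+t*t)))
    by (apply Rmult_lt_compat_r; nra).
  lra.
Qed.
Lemma sq4_le l : 0 <= l -> l <= 1 -> l*l*(l*l) <= l*l.
Proof. intros. assert (l*l <= 1) by nra. assert (0 <= l*l) by nra.
  assert (l*l*(l*l) <= l*l*1) by (apply Rmult_le_compat_l; lra). lra. Qed.
Lemma bern4 e : 0 <= e <= 1 -> 1 - 4*e <= ((1-e)*(1-e))*((1-e)*(1-e)).
Proof. intros. assert (1 - 2*e <= (1-e)*(1-e)) by nra.
  assert (0 <= (1-e)*(1-e)) by nra.
  destruct (Rle_or_lt 0 (1-2*e)).
  - assert ((1-2*e)*(1-2*e) <= ((1-e)*(1-e))*((1-e)*(1-e))) by (apply Rmult_le_compat; lra). nra.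
  - assert (0 <= ((1-e)*(1-e))*((1-e)*(1-e))) by nra. lra. Qed.

Definition G a (g:pt) r := 0 < r /\ inBalpha a (dil (/r) g).

Lemma G_glb a g : 0 < a -> exists m, is_glb (G a g) m.
Proof.
  intros ha.
  set (E := fun y => G a g (-y)).
  assert (hb : bound E).
  { exists 0. intros y [hy _]. lra. }
  set (K := xc g * xc g + yc g * yc g + zc g * zc g).
  assert (K0 : 0 <= K) by (unfold K; nra).
  set (r0 := 1 + K/(a*a)).
  assert (hK : K/(a*a) * (a*a) = K) by (field; lra).
  assert (K1 : 0 <= K/(a*a)) by (unfold Rdiv; apply Rmult_le_pos; [lra|]; apply Rlt_le, Rinv_0_lt_compat; nra).
  assert (hne : exists y, E y).
  { exists (- r0). unfold E, G. rewrite Ropp_involutive.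
    assert (r00 : 0 < r0) by (unfold r0; lra). split; [exact r00|].
    unfold inBalpha, dil; simpl.
    set (l := / r0).
    assert (hl : l * r0 = 1) by (unfold l; field; lra).
    assert (l0 : 0 < l) by (unfold l; apply Rinv_0_lt_compat; lra).
    clearbody l.
    assert (r01 : 1 <= r0) by (unfold r0; lra).
    assert (l1 : l <= 1) by (assert (l*1 <= l*r0) by (apply Rmult_le_compat_l; lra); lra).
    assert (lK : l * K <= a*a).
    { assert (K <= a*a*r0) by (unfold r0; nra). nra. }
    assert (l*l*(l*l) <= l*l) by (apply sq4_le; lra).
    assert (l*l <= l) by nra.
    assert (e : (l * xc g) * (l * xc g) + (l * yc g) * (l * yc g) + (l*l*zc g)*(l*l*zc g)
               = l*l*(xc g * xc g + yc g * yc g) + l*l*(l*l)*(zc g * zc g)) by ring.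
    rewrite e.
    assert (l*l*(l*l)*(zc g*zc g) <= l*l*(zc g * zc g)) by (apply Rmult_le_compat_r; nra).
    assert (l*l*K <= l*K) by (apply Rmult_le_compat_r; nra).
    unfold K in *. nra. }
  destruct (completeness E hb hne) as [m [hm1 hm2]].
  exists (- m). split.
  - intros r hr. assert (E (-r)) by (unfold E; rewrite Ropp_involutive; exact hr).
    specialize (hm1 _ H). lra.
  - intros b hb'. assert (is_upper_bound E (-b)).
    { intros y hy. specialize (hb' _ hy). lra. }
    specialize (hm2 _ H). lra.
Qed.

Lemma dalpha_glb a p q : 0 < a -> is_glb (dset a p q) (dalpha a p q).
Proof. intros ha. unfold dalpha. apply epsilon_spec. apply (G_glb a). exact ha. Qed.

Lemma F_mono (x y z l m : R) : 0 <= m <= l ->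
  (m*x)*(m*x) + (m*y)*(m*y) + (m*m*z)*(m*m*z) <= (l*x)*(l*x) + (l*y)*(l*y) + (l*l*z)*(l*l*z).
Proof.
  intros [h0 h1].
  assert (m*m <= l*l) by nra.
  assert ((m*m)*(m*m) <= (l*l)*(l*l)) by (apply Rmult_le_compat; nra).
  replace ((m*x)*(m*x) + (m*y)*(m*y) + (m*m*z)*(m*m*z)) with
    ((m*m)*(x*x+y*y) + ((m*m)*(m*m))*(z*z)) by ring.
  replace ((l*x)*(l*x) + (l*y)*(l*y) + (l*l*z)*(l*l*z)) with
    ((l*l)*(x*x+y*y) + ((l*l)*(l*l))*(z*z)) by ring.
  apply Rplus_le_compat; apply Rmult_le_compat_r; nra.
Qed.

Lemma G_attained a g m : 0 < a -> is_glb (G a g) m -> 0 < xc g * xc g + yc g * yc g ->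
  0 < m /\ G a g m.
Proof.
  intros ha [hm1 hm2] hs.
  set (s := xc g * xc g + yc g * yc g) in *.
  assert (hlow : forall r, G a g r -> Rmin 1 (s/(a*a)) <= r).
  { intros r [r0 hr]. unfold inBalpha, dil in hr; simpl in hr.
    set (l := / r) in hr.
    assert (hl : l * r = 1) by (unfold l; field; lra).
    assert (l*l*s <= a*a).
    { unfold s. assert (0 <= (l*l*zc g)*(l*l*zc g)) by nra. nra. }
    assert (s <= a*a*(r*r)).
    { assert (l*l*s*(r*r) <= a*a*(r*r)) by (apply Rmult_le_compat_r; nra).
      replace (l*l*s*(r*r)) with ((l*r)*(l*r)*s) in H0 by ring. rewrite hl in H0. lra. }
    destruct (Rle_or_lt 1 r) as [h|h].
    - apply Rle_trans with 1; [apply Rmin_l|exact h].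
    - apply Rle_trans with (s/(a*a)); [apply Rmin_r|].
      apply (Rmult_le_reg_r (a*a)); [nra|]. unfold Rdiv. rewrite Rmult_assoc, Rinv_l by nra. nra. }
  assert (mpos : 0 < m).
  { apply Rlt_le_trans with (Rmin 1 (s/(a*a))); [|apply hm2; exact hlow].
    apply Rmin_glb_lt; [lra|]. apply Rdiv_lt_0_compat; nra. }
  split; [exact mpos|]. split; [exact mpos|].
  destruct (classic (inBalpha a (dil (/m) g))) as [h|h]; [exact h|]. exfalso.
  unfold inBalpha, dil in h; simpl in h.
  set (l0 := / m) in h.
  assert (l00 : 0 < l0) by (unfold l0; apply Rinv_0_lt_compat; lra).
  set (V := (l0 * xc g) * (l0 * xc g) + (l0 * yc g) * (l0 * yc g) + (l0*l0*zc g)*(l0*l0*zc g)) in h.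
  apply Rnot_le_lt in h.
  set (e := (V - a*a)/(8*V)).
  assert (V0 : 0 < V) by nra.
  assert (he : e * (8*V) = V - a*a) by (unfold e; field; lra).
  assert (e0 : 0 < e) by (unfold e; apply Rdiv_lt_0_compat; nra).
  assert (e1 : e < 1/8) by nra.
  set (lam := 1 - e).
  set (mu := lam * l0).
  assert (mu0 : 0 < mu) by (unfold mu, lam; nra).
  assert (mul : mu < l0) by (unfold mu, lam; nra).
  assert (hF : a*a < (mu * xc g) * (mu * xc g) + (mu * yc g) * (mu * yc g) + (mu*mu*zc g)*(mu*mu*zc g)).
  { replace ((mu * xc g) * (mu * xc g) + (mu * yc g) * (mu * yc g) + (mu*mu*zc g)*(mu*mu*zc g))
      with ((lam*lam)*((l0*l0)*s) + ((lam*lam)*(lam*lam))*((l0*l0)*(l0*l0)*(zc g*zc g)))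
      by (unfold mu, s; ring).
    assert (eV : V = (l0*l0)*s + (l0*l0)*(l0*l0)*(zc g*zc g)) by (unfold V, s; ring).
    assert (L4 : 1 - 4*e <= (lam*lam)*(lam*lam)) by (unfold lam; apply bern4; lra).
    assert (L2 : (lam*lam)*(lam*lam) <= lam*lam) by (unfold lam; apply sq4_le; lra).
    assert (0 <= (l0*l0)*s) by nra.
    assert (0 <= (l0*l0)*(l0*l0)*(zc g*zc g)) by nra.
    assert ((lam*lam)*(lam*lam)*((l0*l0)*s) <= (lam*lam)*((l0*l0)*s)) by (apply Rmult_le_compat_r; lra).
    assert ((1-4*e)*V <= (lam*lam)*(lam*lam)*V) by (apply Rmult_le_compat_r; lra).
    nra. }
  assert (r1low : forall r, G a g r -> /mu <= r).
  { intros r [r0 hr]. destruct (Rle_or_lt (/mu) r) as [hh|hh]; [exact hh|]. exfalso.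
    unfold inBalpha, dil in hr; simpl in hr.
    assert (/ (/ mu) < / r) by (apply Rinv_lt_contravar; [apply Rmult_lt_0_compat; [lra|apply Rinv_0_lt_compat; lra]|exact hh]).
    rewrite Rinv_inv in H.
    pose proof (F_mono (xc g) (yc g) (zc g) (/r) mu ltac:(lra)). lra. }
  assert (hm : /mu <= m) by (apply hm2; exact r1low).
  assert (/ l0 < / mu) by (apply Rinv_lt_contravar; nra).
  unfold l0 in H. rewrite Rinv_inv in H. lra.
Qed.

Lemma side a p q : 0 < a -> 0 < xc p * xc p + yc p * yc p ->
  ~ inB a p (rad a p) q ->
  let L := / rad a p * / rad a p in
  0 < L /\
  L*(xc p*xc p+yc p*yc p) + L*L*(zc p*zc p) <= a*a /\
  a*a < L*((xc q-xc p)*(xc q-xc p)+(yc q-yc p)*(yc q-yc p))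
   + L*L*((zc q-zc p+/2*(xc q*yc p-xc p*yc q))*(zc q-zc p+/2*(xc q*yc p-xc p*yc q))).
Proof.
  intros ha hs hn L.
  destruct (G_attained a (hmul (hinv origin) p) (rad a p) ha (dalpha_glb a origin p ha))
    as [R0 [_ HG]].
  { simpl. replace ((- 0 + xc p) * (- 0 + xc p) + (- 0 + yc p) * (- 0 + yc p)) with
      (xc p * xc p + yc p * yc p) by ring. exact hs. }
  assert (L0 : 0 < L) by (unfold L; apply Rmult_lt_0_compat; apply Rinv_0_lt_compat; lra).
  split; [exact L0|]. split.
  - unfold inBalpha, dil in HG; simpl in HG. unfold L.
    eapply Rle_trans; [right|exact HG]. ring.
  - assert (hgt : rad a p < dalpha a q p) by (unfold inB in hn; lra).
    destruct (dalpha_glb a q p ha) as [hg1 _].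
    assert (hnot : ~ inBalpha a (dil (/ rad a p) (hmul (hinv q) p))).
    { intro hin. assert (dalpha a q p <= rad a p) by (apply hg1; split; assumption). lra. }
    unfold inBalpha, dil in hnot; simpl in hnot. apply Rnot_le_lt in hnot.
    eapply Rlt_le_trans; [exact hnot|right]. unfold L. ring.
Qed.

Theorem lemma2p5 (a : R) (ha : 0 < a) (hd : is_distance (dalpha a)) :
  exists theta1 : R, 0 < theta1 < PI / 8 /\
    forall theta : R, 0 < theta < theta1 ->
    forall p q : pt,
      zc q <= 0 -> zc p <= 0 -> rho q <= rho p ->
      inCone theta p -> inCone theta q ->
      ~ inB a p (rad a p) q -> ~ inB a q (rad a q) p ->
      zc q < 2 * zc p /\ rho q < rho p * cos (2 * theta).
Proof.
  set (u := / (8*(a+1))).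
  assert (u0 : 0 < u) by (unfold u; apply Rinv_0_lt_compat; lra).
  assert (atu : 0 < atan u) by (rewrite <- atan_0; apply atan_increasing; exact u0).
  assert (PI0 := PI_RGT_0).
  exists (Rmin (atan u) (PI/16)). split.
  { split. apply Rmin_glb_lt; lra. apply Rle_lt_trans with (PI/16); [apply Rmin_r|lra]. }
  intros theta [th0 th1] p q hzq hzp hrho hcp hcq hnp hnq.
  assert (tha : theta < atan u) by (apply Rlt_le_trans with (Rmin (atan u) (PI/16)); [lra|apply Rmin_l]).
  assert (thp : theta < PI/16) by (apply Rlt_le_trans with (Rmin (atan u) (PI/16)); [lra|apply Rmin_r]).
  assert (cpos : 0 < cos theta) by (apply cos_gt_0; lra).
  assert (spos : 0 < sin theta) by (apply sin_gt_0; lra).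
  set (t := tan theta) in *.
  assert (t0 : 0 < t) by (unfold t, tan; apply Rdiv_lt_0_compat; lra).
  assert (tu : t < u).
  { unfold t. rewrite <- (tan_atan u). apply tan_increasing; try lra.
    destruct (atan_bound u); lra. }
  assert (t8 : t*(8*(a+1)) <= 1).
  { assert (t*(8*(a+1)) < u*(8*(a+1))) by (apply Rmult_lt_compat_r; lra).
    unfold u in H. rewrite Rinv_l in H by lra. lra. }
  assert (hcos : cos (2*theta) * (1 + t*t) = 1 - t*t).
  { unfold t, tan. rewrite cos_2a. pose proof (sin2_cos2 theta). unfold Rsqr in H.
    assert (e1 : 1 + sin theta / cos theta * (sin theta / cos theta)
       = (cos theta * cos theta + sin theta * sin theta) / (cos theta * cos theta)) by (field; lra).
    rewrite e1. replace (cos theta * cos theta + sin theta * sin theta) with 1 by lra.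
    field. lra. }
  unfold inCone in hcp, hcq. fold t in hcp, hcq.
  assert (xp0 : 0 < xc p) by (pose proof (Rabs_pos (yc p)); nra).
  assert (xq0 : 0 < xc q) by (pose proof (Rabs_pos (yc q)); nra).
  assert (sp : 0 < xc p * xc p + yc p * yc p) by nra.
  assert (sq : 0 < xc q * xc q + yc q * yc q) by nra.
  destruct (side a p q ha sp hnp) as [Lp0 [Mp NA]].
  destruct (side a q p ha sq hnq) as [Lq0 [Mq NB]].
  unfold rho in *.
  set (rp := sqrt (xc p * xc p + yc p * yc p)) in *.
  set (rq := sqrt (xc q * xc q + yc q * yc q)) in *.
  assert (erp : rp * rp = xc p * xc p + yc p * yc p) by (apply sqrt_sqrt; lra).
  assert (erq : rq * rq = xc q * xc q + yc q * yc q) by (apply sqrt_sqrt; lra).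
  assert (rp0 : 0 <= rp) by apply sqrt_pos. assert (rq0 : 0 <= rq) by apply sqrt_pos.
  destruct (core a t (xc p) (yc p) (zc p) (xc q) (yc q) (zc q) rp rq
     (/ rad a p * / rad a p) (/ rad a q * / rad a q)) as [G1 G2]; try assumption.
  - eapply Rlt_le_trans; [exact NB|right]. ring.
  - split; [exact G1|].
    apply (Rmult_lt_reg_r (1 + t*t)); [nra|]. rewrite Rmult_assoc, hcos. exact G2.
Qed.
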